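(* For all closed terms $P,Q\in\mathcal S_A$: $\mathrm{EqFSCL}\vdash P=Q$ if and only if $\mathrm{FSCL}\vdash P=Q$, where $\mathrm{FSCL}\vdash P=Q$ means that $P=Q$ is derivable in equational logic over the signature $\Sigma_{CP}(A)\cup\Sigma_{SCL}(A)$ from the axioms CP1–CP4 together with $\neg x=\mathsf F\triangleleft x\triangleright\mathsf T$, $x\land^\circ y=y\triangleleft x\triangleright\mathsf F$ and $x\lor^\circ y=\mathsf T\triangleleft x\triangleright y$.
   Context: Let $A$ be a nonempty set of atoms. $\Sigma_{SCL}(A)$ has constants $\mathsf T,\mathsf F$, atoms $a\in A$, unary $\neg$, binary $\land^\circ$ (left-sequential conjunction) and $\lor^\circ$ (left-sequential disjunction); $\mathcal S_A$ is the set of its closed terms. $\Sigma_{CP}(A)$ has constants $\mathsf T,\mathsf F$, atoms $a\in A$, and Hoare's ternary conditional $x\triangleleft y\triangleright z$ (''if $y$ then $x$ else $z$''). CP consists of: (CP1) $x\triangleleft\mathsf T\triangleright y=x$; (CP2) $x\triangleleft\mathsf F\triangleright y=y$; (CP3) $\mathsf T\triangleleft x\triangleright\mathsf F=x$; (CP4) $x\triangleleft(y\triangleleft z\triangleright u)\triangleright v=(x\triangleleft y\triangleright v)\triangleleft z\triangleright(x\triangleleft u\triangleright v)$. (In the paper, FSCL is defined as the logic whose consequences are those of exporting $\{\mathsf T,\neg,\land^\circ\}$ from CP plus the definitions of $\neg$ and $\land^\circ$, with $\mathsf F=\neg\mathsf T$ and $x\lor^\circ y=\neg(\neg x\land^\circ\neg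 y)$ added; these are derivably equal to the definitions above.) EqFSCL is the set of equations in variables $x,y,z$: (F1) $\mathsf F=\neg\mathsf T$; (F2) $x\lor^\circ y=\neg(\neg x\land^\circ\neg y)$; (F3) $\neg\neg x=x$; (F4) $\mathsf T\land^\circ x=x$; (F5) $x\lor^\circ\mathsf F=x$; (F6) $\mathsf F\land^\circ x=\mathsf F$; (F7) $(x\land^\circ y)\land^\circ z=x\land^\circ(y\land^\circ z)$; (F8) $\neg x\land^\circ\mathsf F=x\land^\circ\mathsf F$; (F9) $(x\land^\circ\mathsf F)\lor^\circ y=(x\lor^\circ\mathsf T)\land^\circ y$; (F10) $(x\land^\circ y)\lor^\circ(z\land^\circ\mathsf F)=(x\lor^\circ(z\land^\circ\mathsf F))\land^\circ(y\lor^\circ(z\land^\circ\mathsf F))$. $\vdash$ denotes derivability in equational logic. *)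

(* Defs.v *)
Set Implicit Arguments.

Section Terms.
Variable A : Type.

Inductive sterm : Type :=
| SVar : nat -> sterm
| ST : sterm
| SF : sterm
| SAtom : A -> sterm
| SNeg : sterm -> sterm
| SAnd : sterm -> sterm -> sterm
| SOr : sterm -> sterm -> sterm.

Fixpoint sclosed (t : sterm) : Prop :=
  match t with
  | SVar _ => False
  | ST | SF | SAtom _ => True
  | SNeg x => sclosed x
  | SAnd x y | SOr x y => sclosed x /\ sclosed y
  end.

Fixpoint ssubst (s : nat -> sterm) (t : sterm) : sterm :=
  match t with
  | SVar n => s n
  | ST => ST | SF => SF | SAtom a => SAtom a
  | SNeg x => SNeg (ssubst s x)
  | SAnd x y => SAnd (ssubst s x) (ssubst s y)
  | SOr x y => SOr (ssubst s x) (ssubst s y)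
  end.

(* The axioms EqFSCL (x = SVar 0, y = SVar 1, z = SVar 2). *)
Inductive EqFSCL_axiom : sterm -> sterm -> Prop :=
| F1 : EqFSCL_axiom SF (SNeg ST)
| F2 : EqFSCL_axiom (SOr (SVar 0) (SVar 1)) (SNeg (SAnd (SNeg (SVar 0)) (SNeg (SVar 1))))
| F3 : EqFSCL_axiom (SNeg (SNeg (SVar 0))) (SVar 0)
| F4 : EqFSCL_axiom (SAnd ST (SVar 0)) (SVar 0)
| F5 : EqFSCL_axiom (SOr (SVar 0) SF) (SVar 0)
| F6 : EqFSCL_axiom (SAnd SF (SVar 0)) SF
| F7 : EqFSCL_axiom (SAnd (SAnd (SVar 0) (SVar 1)) (SVar 2))
                    (SAnd (SVar 0) (SAnd (SVar 1) (SVar 2)))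
| F8 : EqFSCL_axiom (SAnd (SNeg (SVar 0)) SF) (SAnd (SVar 0) SF)
| F9 : EqFSCL_axiom (SOr (SAnd (SVar 0) SF) (SVar 1)) (SAnd (SOr (SVar 0) ST) (SVar 1))
| F10 : EqFSCL_axiom (SOr (SAnd (SVar 0) (SVar 1)) (SAnd (SVar 2) SF))
                     (SAnd (SOr (SVar 0) (SAnd (SVar 2) SF)) (SOr (SVar 1) (SAnd (SVar 2) SF))).

Inductive EqFSCL_derives : sterm -> sterm -> Prop :=
| sd_ax : forall l r (s : nat -> sterm), EqFSCL_axiom l r ->
    EqFSCL_derives (ssubst s l) (ssubst s r)
| sd_refl : forall t, EqFSCL_derives t t
| sd_sym : forall t u, EqFSCL_derives t u -> EqFSCL_derives u t
| sd_trans : forall t u v, EqFSCL_derives t u -> EqFSCL_derives u v -> EqFSCL_derives t v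
| sd_neg : forall t u, EqFSCL_derives t u -> EqFSCL_derives (SNeg t) (SNeg u)
| sd_and : forall t t' u u', EqFSCL_derives t t' -> EqFSCL_derives u u' ->
    EqFSCL_derives (SAnd t u) (SAnd t' u')
| sd_or : forall t t' u u', EqFSCL_derives t t' -> EqFSCL_derives u u' ->
    EqFSCL_derives (SOr t u) (SOr t' u').

Inductive cterm : Type :=
| CVar : nat -> cterm
| CT : cterm
| CF : cterm
| CAtom : A -> cterm
| CNeg : cterm -> cterm
| CAnd : cterm -> cterm -> cterm
| COr : cterm -> cterm -> cterm
| CCond : cterm -> cterm -> cterm -> cterm.  (* CCond x y z = x <| y |> z : "if y then x else z" *)

Fixpoint csubst (s : nat -> cterm) (t : cterm) : cterm :=
  match t with
  | CVar n => s n
  | CT => CT | CF => CF | CAtom a => CAtom a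
  | CNeg x => CNeg (csubst s x)
  | CAnd x y => CAnd (csubst s x) (csubst s y)
  | COr x y => COr (csubst s x) (csubst s y)
  | CCond x y z => CCond (csubst s x) (csubst s y) (csubst s z)
  end.

Fixpoint embed (t : sterm) : cterm :=
  match t with
  | SVar n => CVar n
  | ST => CT | SF => CF | SAtom a => CAtom a
  | SNeg x => CNeg (embed x)
  | SAnd x y => CAnd (embed x) (embed y)
  | SOr x y => COr (embed x) (embed y)
  end.

Inductive FSCL_axiom : cterm -> cterm -> Prop :=
| CP1 : FSCL_axiom (CCond (CVar 0) CT (CVar 1)) (CVar 0)
| CP2 : FSCL_axiom (CCond (CVar 0) CF (CVar 1)) (CVar 1)
| CP3 : FSCL_axiom (CCond CT (CVar 0) CF) (CVar 0)
| CP4 : FSCL_axiom (CCond (CVar 0) (CCond (CVar 1) (CVar 2) (CVar 3)) (CVar 4))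
                   (CCond (CCond (CVar 0) (CVar 1) (CVar 4)) (CVar 2)
                          (CCond (CVar 0) (CVar 3) (CVar 4)))
| Def_neg : FSCL_axiom (CNeg (CVar 0)) (CCond CF (CVar 0) CT)
| Def_and : FSCL_axiom (CAnd (CVar 0) (CVar 1)) (CCond (CVar 1) (CVar 0) CF)
| Def_or : FSCL_axiom (COr (CVar 0) (CVar 1)) (CCond CT (CVar 0) (CVar 1)).

Inductive FSCL_derives : cterm -> cterm -> Prop :=
| cd_ax : forall l r (s : nat -> cterm), FSCL_axiom l r ->
    FSCL_derives (csubst s l) (csubst s r)
| cd_refl : forall t, FSCL_derives t t
| cd_sym : forall t u, FSCL_derives t u -> FSCL_derives u t
| cd_trans : forall t u v, FSCL_derives t u -> FSCL_derives u v -> FSCL_derives t v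
| cd_neg : forall t u, FSCL_derives t u -> FSCL_derives (CNeg t) (CNeg u)
| cd_and : forall t t' u u', FSCL_derives t t' -> FSCL_derives u u' ->
    FSCL_derives (CAnd t u) (CAnd t' u')
| cd_or : forall t t' u u', FSCL_derives t t' -> FSCL_derives u u' ->
    FSCL_derives (COr t u) (COr t' u')
| cd_cond : forall t t' u u' v v', FSCL_derives t t' -> FSCL_derives u u' ->
    FSCL_derives v v' -> FSCL_derives (CCond t u v) (CCond t' u' v').

End Terms.

(* Main.v *)
Require Import Defs.
From Stdlib Require Import Setoid Morphisms Arith Lia Bool.

Add Parametric Relation (B : Type) : (sterm B) (@EqFSCL_derives B)
  reflexivity proved by (@sd_refl B) symmetry proved by (@sd_sym B)
  transitivity proved by (@sd_trans B) as eqrel.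
Add Parametric Morphism (B : Type) : (@SNeg B) with signature
  (@EqFSCL_derives B) ==> (@EqFSCL_derives B) as neg_mor.
Proof. apply sd_neg. Qed.
Add Parametric Morphism (B : Type) : (@SAnd B) with signature
  (@EqFSCL_derives B) ==> (@EqFSCL_derives B) ==> (@EqFSCL_derives B) as and_mor.
Proof. intros; apply sd_and; auto. Qed.
Add Parametric Morphism (B : Type) : (@SOr B) with signature
  (@EqFSCL_derives B) ==> (@EqFSCL_derives B) ==> (@EqFSCL_derives B) as or_mor.
Proof. intros; apply sd_or; auto. Qed.

Section Main.
Variable A : Type.

Inductive tr := Lf (b:bool) | Nd (a:A) (l r:tr).

Fixpoint sb (t p q : tr) : tr :=
  match t with Lf true => p | Lf false => q | Nd a l r => Nd a (sb l p q) (sb r p q) end.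

Lemma sb_assoc t p q p' q' : sb (sb t p q) p' q' = sb t (sb p p' q') (sb q p' q').
Proof. induction t as [[]|a l IHl r IHr]; simpl; congruence. Qed.
Lemma sb_id t : sb t (Lf true) (Lf false) = t.
Proof. induction t as [[]|a l IHl r IHr]; simpl; congruence. Qed.

Fixpoint sem (e : nat -> tr) (t : sterm A) : tr :=
  match t with
  | SVar _ n => e n
  | ST _ => Lf true | SF _ => Lf false
  | SAtom a => Nd a (Lf true) (Lf false)
  | SNeg x => sb (sem e x) (Lf false) (Lf true)
  | SAnd x y => sb (sem e x) (sem e y) (Lf false)
  | SOr x y => sb (sem e x) (Lf true) (sem e y)
  end.

Lemma sem_subst e s t : sem e (ssubst s t) = sem (fun n => sem e (s n)) t.
Proof. induction t; simpl; congruence. Qed.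

Lemma ax_sound l r : EqFSCL_axiom l r -> forall e, sem e l = sem e r.
Proof. destruct 1; intro e; simpl; repeat rewrite ?sb_assoc; simpl; rewrite ?sb_id; auto. Qed.

Lemma eq_sound t u : EqFSCL_derives t u -> forall e, sem e t = sem e u.
Proof.
  induction 1; intro e; simpl; try congruence.
  rewrite !sem_subst. apply ax_sound; auto.
Qed.

Fixpoint csem (e : nat -> tr) (t : cterm A) : tr :=
  match t with
  | CVar _ n => e n
  | CT _ => Lf true | CF _ => Lf false
  | CAtom a => Nd a (Lf true) (Lf false)
  | CNeg x => sb (csem e x) (Lf false) (Lf true)
  | CAnd x y => sb (csem e x) (csem e y) (Lf false)
  | COr x y => sb (csem e x) (Lf true) (csem e y)
  | CCond x y z => sb (csem e y) (csem e x) (csem e z)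
  end.

Lemma csem_subst e s t : csem e (csubst s t) = csem (fun n => csem e (s n)) t.
Proof. induction t; simpl; congruence. Qed.

Lemma cax_sound l r : FSCL_axiom l r -> forall e, csem e l = csem e r.
Proof. destruct 1; intro e; simpl; repeat rewrite ?sb_assoc; simpl; rewrite ?sb_id; auto. Qed.

Lemma c_sound t u : FSCL_derives t u -> forall e, csem e t = csem e u.
Proof.
  induction 1; intro e; simpl; try congruence.
  rewrite !csem_subst. apply cax_sound; auto.
Qed.

Lemma csem_embed e t : csem e (embed t) = sem e t.
Proof. induction t; simpl; congruence. Qed.


Fixpoint bf (t : tr) : cterm A :=
  match t with
  | Lf true => CT A | Lf false => CF A
  | Nd a l r => CCond (bf l) (CAtom a) (bf r)
  end.

Fixpoint cclosed (t : cterm A) : Prop :=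
  match t with
  | CVar _ _ => False
  | CT _ | CF _ | CAtom _ => True
  | CNeg x => cclosed x
  | CAnd x y | COr x y => cclosed x /\ cclosed y
  | CCond x y z => cclosed x /\ cclosed y /\ cclosed z
  end.

Lemma cclosed_embed t : sclosed t -> cclosed (embed t).
Proof. induction t; simpl; tauto. Qed.

Definition s3 (x y z : cterm A) (n : nat) : cterm A :=
  match n with 0 => x | 1 => y | _ => z end.
Definition s5 (x y z u v : cterm A) (n : nat) : cterm A :=
  match n with 0 => x | 1 => y | 2 => z | 3 => u | _ => v end.

Lemma cp1 (x y : cterm A) : FSCL_derives (CCond x (CT A) y) x.
Proof. exact (cd_ax (s3 x y y) (CP1 A)). Qed.
Lemma cp2 (x y : cterm A) : FSCL_derives (CCond x (CF A) y) y.
Proof. exact (cd_ax (s3 x y y) (CP2 A)). Qed.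
Lemma cp3 (x : cterm A) : FSCL_derives (CCond (CT A) x (CF A)) x.
Proof. exact (cd_ax (s3 x x x) (CP3 A)). Qed.
Lemma cp4 (x y z u v : cterm A) : FSCL_derives (CCond x (CCond y z u) v)
   (CCond (CCond x y v) z (CCond x u v)).
Proof. exact (cd_ax (s5 x y z u v) (CP4 A)). Qed.
Lemma cdneg (x : cterm A) : FSCL_derives (CNeg x) (CCond (CF A) x (CT A)).
Proof. exact (cd_ax (s3 x x x) (Def_neg A)). Qed.
Lemma cdand (x y : cterm A) : FSCL_derives (CAnd x y) (CCond y x (CF A)).
Proof. exact (cd_ax (s3 x y y) (Def_and A)). Qed.
Lemma cdor (x y : cterm A) : FSCL_derives (COr x y) (CCond (CT A) x y).
Proof. exact (cd_ax (s3 x y y) (Def_or A)). Qed.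

Lemma cond_bf p t q : FSCL_derives (CCond (bf p) (bf t) (bf q)) (bf (sb t p q)).
Proof.
  induction t as [[]|a l IHl r IHr]; simpl.
  - apply cp1.
  - apply cp2.
  - eapply cd_trans. apply cp4. apply cd_cond; auto. apply cd_refl.
Qed.

Lemma bf_complete e t : cclosed t -> FSCL_derives t (bf (csem e t)).
Proof.
  induction t; simpl; intro H.
  - destruct H.
  - apply cd_refl.
  - apply cd_refl.
  - apply cd_sym, cp3.
  - eapply cd_trans. apply cdneg. eapply cd_trans. 2: apply cond_bf.
    apply cd_cond; auto using cd_refl.
  - destruct H. eapply cd_trans. apply cdand. eapply cd_trans. 2: apply cond_bf.
    apply cd_cond; auto using cd_refl.
  - destruct H. eapply cd_trans. apply cdor. eapply cd_trans. 2: apply cond_bf.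
    apply cd_cond; auto using cd_refl.
  - destruct H as [? []]. eapply cd_trans. 2: apply cond_bf.
    apply cd_cond; auto using cd_refl.
Qed.

Definition e0 : nat -> tr := fun _ => Lf true.

Lemma dir1 (P Q : sterm A) : sclosed P -> sclosed Q -> EqFSCL_derives P Q ->
  FSCL_derives (embed P) (embed Q).
Proof.
  intros HP HQ H. pose proof (eq_sound _ _ H e0) as E.
  eapply cd_trans. apply (bf_complete e0). apply cclosed_embed; auto.
  rewrite csem_embed, E, <- (csem_embed e0 Q).
  apply cd_sym, bf_complete, cclosed_embed; auto.
Qed.


Notation "x == y" := (@EqFSCL_derives A x y) (at level 70).
Notation T := (ST A).
Notation F := (SF A).

Definition t3 (x y z : sterm A) (n : nat) : sterm A :=
  match n with 0 => x | 1 => y | _ => z end.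

Lemma ax1 : F == SNeg T. Proof. exact (sd_ax (t3 T T T) (F1 A)). Qed.
Lemma ax2 (x y : sterm A) : SOr x y == SNeg (SAnd (SNeg x) (SNeg y)).
Proof. exact (sd_ax (t3 x y y) (F2 A)). Qed.
Lemma ax3 (x : sterm A) : SNeg (SNeg x) == x.
Proof. exact (sd_ax (t3 x x x) (F3 A)). Qed.
Lemma ax4 (x : sterm A) : SAnd T x == x.
Proof. exact (sd_ax (t3 x x x) (F4 A)). Qed.
Lemma ax5 (x : sterm A) : SOr x F == x.
Proof. exact (sd_ax (t3 x x x) (F5 A)). Qed.
Lemma ax6 (x : sterm A) : SAnd F x == F.
Proof. exact (sd_ax (t3 x x x) (F6 A)). Qed.
Lemma ax7 (x y z : sterm A) : SAnd (SAnd x y) z == SAnd x (SAnd y z).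
Proof. exact (sd_ax (t3 x y z) (F7 A)). Qed.
Lemma ax8 (x : sterm A) : SAnd (SNeg x) F == SAnd x F.
Proof. exact (sd_ax (t3 x x x) (F8 A)). Qed.
Lemma ax9 (x y : sterm A) : SOr (SAnd x F) y == SAnd (SOr x T) y.
Proof. exact (sd_ax (t3 x y y) (F9 A)). Qed.
Lemma ax10 (x y z : sterm A) : SOr (SAnd x y) (SAnd z F) ==
  SAnd (SOr x (SAnd z F)) (SOr y (SAnd z F)).
Proof. exact (sd_ax (t3 x y z) (F10 A)). Qed.

Lemma neg_inj (x y : sterm A) : SNeg x == SNeg y -> x == y.
Proof. intro H. rewrite <- (ax3 x), <- (ax3 y), H. reflexivity. Qed.

Lemma negF : SNeg F == T.
Proof. rewrite ax1, ax3. reflexivity. Qed.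
Lemma dm1 (x y : sterm A) : SNeg (SAnd x y) == SOr (SNeg x) (SNeg y).
Proof. rewrite ax2, !ax3. reflexivity. Qed.
Lemma dm2 (x y : sterm A) : SNeg (SOr x y) == SAnd (SNeg x) (SNeg y).
Proof. rewrite ax2, ax3. reflexivity. Qed.
Lemma andT (x : sterm A) : SAnd x T == x.
Proof.
  apply neg_inj. rewrite <- (ax5 (SNeg x)). rewrite ax2, ax3, negF. reflexivity.
Qed.
Lemma orT_ (x : sterm A) : SOr T x == T.
Proof. rewrite ax2, <- ax1, ax6, negF. reflexivity. Qed.
Lemma orF_ (x : sterm A) : SOr F x == x.
Proof. rewrite ax2, negF, ax4, ax3. reflexivity. Qed.
Lemma orA (x y z : sterm A) : SOr (SOr x y) z == SOr x (SOr y z).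
Proof. rewrite !ax2, !ax3, ax7. reflexivity. Qed.
Lemma d8 (x : sterm A) : SOr (SNeg x) T == SOr x T.
Proof. apply neg_inj. rewrite !dm2, ax3, <- ax1, ax8. reflexivity. Qed.
Lemma d10 (x y z : sterm A) : SAnd (SOr x y) (SOr z T) ==
  SOr (SAnd x (SOr z T)) (SAnd y (SOr z T)).
Proof.
  apply neg_inj. rewrite dm1, !dm2, <- ax1, ax10, !dm1, dm2, <- ax1. reflexivity.
Qed.

Notation TL x := (forall y, SOr x y == x).
Notation FL x := (forall y, SAnd x y == x).

Lemma TL_neg x : TL x -> FL (SNeg x).
Proof. intros H y. rewrite <- (ax3 y), <- dm2, H. reflexivity. Qed.
Lemma FL_neg x : FL x -> TL (SNeg x).
Proof. intros H y. rewrite <- (ax3 y), <- dm1, H. reflexivity. Qed.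
Lemma TL_andF x : TL x -> SAnd x F == SNeg x.
Proof. intro H. rewrite <- ax8. apply TL_neg; auto. Qed.
Lemma FL_orT x : FL x -> SOr x T == SNeg x.
Proof. intro H. rewrite <- d8. apply FL_neg; auto. Qed.
Lemma FL_or x y : FL x -> SOr x y == SAnd (SNeg x) y.
Proof. intro H. rewrite <- (H F) at 1. rewrite ax9, FL_orT; auto. reflexivity. Qed.
Lemma TL_and x y : TL x -> SAnd x y == SOr (SNeg x) y.
Proof. intro H. rewrite FL_or, ax3. reflexivity. apply TL_neg; auto. Qed.
Lemma TL_eq x : TL x -> x == SOr (SNeg x) T.
Proof. intro H. rewrite FL_orT, ax3. reflexivity. apply TL_neg; auto. Qed.
Lemma FL_eq x : FL x -> x == SAnd (SNeg x) F.
Proof. intro H. rewrite TL_andF, ax3. reflexivity. apply FL_neg; auto. Qed.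

Lemma Dist x y t : TL t -> SAnd (SOr x y) t == SOr (SAnd x t) (SAnd y t).
Proof. intro H. rewrite <- (H T) at 1 2 3. apply d10. Qed.

Lemma L1 x f t : FL f -> TL t -> SAnd (SOr x f) t == SOr (SAnd x t) f.
Proof. intros Hf Ht. rewrite Dist, Hf; auto. reflexivity. Qed.

Lemma GSW x t1 t2 : TL t1 -> TL t2 ->
  SOr (SAnd x t1) t2 == SOr (SAnd (SNeg x) t2) t1.
Proof.
  intros H1 H2.
  rewrite (TL_eq t2) at 1 by auto. rewrite <- orA, <- d8, dm2, dm1, ax3.
  rewrite L1 by (auto using TL_neg). rewrite orA, FL_orT, ax3 by (apply TL_neg; auto).
  reflexivity.
Qed.

Lemma SWF x f1 f2 : FL f1 -> FL f2 ->
  SAnd (SOr (SNeg x) f1) f2 == SAnd (SOr x f2) f1.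
Proof.
  intros H1 H2. apply neg_inj.
  rewrite !dm1, !dm2, ax3. rewrite GSW by (auto using FL_neg). reflexivity.
Qed.

Lemma TL_T : TL T. Proof. intro y. apply orT_. Qed.
Lemma FL_F : FL F. Proof. intro y. apply ax6. Qed.
Lemma TL_or x y : TL y -> TL (SOr x y).
Proof. intros H z. rewrite orA, H. reflexivity. Qed.
Lemma FL_and x y : FL y -> FL (SAnd x y).
Proof. intros H z. rewrite ax7, H. reflexivity. Qed.


Set Implicit Arguments.
Inductive isT : sterm A -> Prop :=
| tT : isT T
| tN a t1 t2 : isT t1 -> isT t2 -> isT (SOr (SAnd (SNeg (SAtom a)) t1) t2).
Inductive isF : sterm A -> Prop :=
| fF : isF F
| fN a f1 f2 : isF f1 -> isF f2 -> isF (SAnd (SOr (SAtom a) f1) f2).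

Inductive kind := KL | KC | KD.
Definition flip k := match k with KL => KL | KC => KD | KD => KC end.

Inductive isS : kind -> nat -> sterm A -> Prop :=
| sLP a t f : isT t -> isF f -> isS KL 1 (SOr (SAnd (SAtom a) t) f)
| sLN a t f : isT t -> isF f -> isS KL 1 (SOr (SAnd (SNeg (SAtom a)) t) f)
| sAnd k1 k2 n1 n2 s d : isS k1 n1 s -> isS k2 n2 d -> k2 <> KC ->
    isS KC (n1 + n2) (SAnd s d)
| sOr k1 k2 n1 n2 s c : isS k1 n1 s -> isS k2 n2 c -> k2 <> KD ->
    isS KD (n1 + n2) (SOr s c).

Lemma isT_TL t : isT t -> TL t.
Proof. induction 1. apply TL_T. apply TL_or; auto. Qed.
Lemma isF_FL f : isF f -> FL f.
Proof. induction 1. apply FL_F. apply FL_and; auto. Qed.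

Lemma negT t : isT t -> exists f, isF f /\ SNeg t == f.
Proof.
  induction 1 as [|a t1 t2 H1 [f1 [Hf1 E1]] H2 [f2 [Hf2 E2]]].
  - exists F. split. constructor. symmetry; apply ax1.
  - exists (SAnd (SOr (SAtom a) f1) f2). split. constructor; auto.
    rewrite dm2, dm1, ax3, E1, E2. reflexivity.
Qed.
Lemma negFt f : isF f -> exists t, isT t /\ SNeg f == t.
Proof.
  induction 1 as [|a f1 f2 H1 [t1 [Ht1 E1]] H2 [t2 [Ht2 E2]]].
  - exists T. split. constructor. apply negF.
  - exists (SOr (SAnd (SNeg (SAtom a)) t1) t2). split. constructor; auto.
    rewrite dm1, dm2, E1, E2. reflexivity.
Qed.

Lemma andTT t t' : isT t -> isT t' -> exists u, isT u /\ SAnd t t' == u.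
Proof.
  intros H H'. induction H as [|a t1 t2 H1 [u1 [Hu1 E1]] H2 [u2 [Hu2 E2]]].
  - exists t'. split; auto. apply ax4.
  - exists (SOr (SAnd (SNeg (SAtom a)) u1) u2). split. constructor; auto.
    rewrite Dist by (apply isT_TL; auto). rewrite ax7, E1, E2. reflexivity.
Qed.

Lemma andTF t f : isT t -> isF f -> exists u, isF u /\ SAnd t f == u.
Proof.
  intros H H'.
  destruct (negFt H') as [t1 [Ht1 E1]].
  destruct (andTT H Ht1) as [t2 [Ht2 E2]].
  destruct (negT Ht2) as [f' [Hf' Ef]]. exists f'. split; auto.
  rewrite (FL_eq f) by (apply isF_FL; auto). rewrite <- ax7, E1, E2.
  rewrite TL_andF by (apply isT_TL; auto). auto.
Qed.

Lemma isS_pos k n s : isS k n s -> 1 <= n.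
Proof. induction 1; lia. Qed.

Lemma negS k n s : isS k n s -> exists s', isS (flip k) n s' /\ SNeg s == s'.
Proof.
  induction 1 as [a t f Ht Hf|a t f Ht Hf|k1 k2 n1 n2 s d H1 [s1 [Hs1 E1]] H2 [d1 [Hd1 E2]] Hk
                 |k1 k2 n1 n2 s c H1 [s1 [Hs1 E1]] H2 [c1 [Hc1 E2]] Hk].
  - destruct (negT Ht) as [f' [Hf' Ef]]. destruct (negFt Hf) as [t' [Ht' Et]].
    exists (SOr (SAnd (SNeg (SAtom a)) t') f'). split. constructor; auto.
    rewrite dm2, dm1, L1 by (auto using TL_neg, FL_neg, isT_TL, isF_FL).
    rewrite Ef, Et. reflexivity.
  - destruct (negT Ht) as [f' [Hf' Ef]]. destruct (negFt Hf) as [t' [Ht' Et]].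
    exists (SOr (SAnd (SAtom a) t') f'). split. constructor; auto.
    rewrite dm2, dm1, ax3, L1 by (auto using TL_neg, FL_neg, isT_TL, isF_FL).
    rewrite Ef, Et. reflexivity.
  - exists (SOr s1 d1). split. econstructor; eauto. destruct k2; simpl; congruence.
    rewrite dm1, E1, E2. reflexivity.
  - exists (SAnd s1 c1). split. econstructor; eauto. destruct k2; simpl; congruence.
    rewrite dm2, E1, E2. reflexivity.
Qed.

Lemma andST k n s t : isS k n s -> isT t -> exists s', isS k n s' /\ SAnd s t == s'.
Proof.
  intros H Ht. assert (TLt := isT_TL Ht).
  induction H as [a t0 f Ht0 Hf|a t0 f Ht0 Hf|k1 k2 n1 n2 s d H1 [s1 [Hs1 E1]] H2 [d1 [Hd1 E2]] Hk
                 |k1 k2 n1 n2 s c H1 [s1 [Hs1 E1]] H2 [c1 [Hc1 E2]] Hk].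
  - destruct (andTT Ht0 Ht) as [u [Hu Eu]].
    exists (SOr (SAnd (SAtom a) u) f). split. constructor; auto.
    rewrite Dist, ax7, Eu, (isF_FL Hf) by auto. reflexivity.
  - destruct (andTT Ht0 Ht) as [u [Hu Eu]].
    exists (SOr (SAnd (SNeg (SAtom a)) u) f). split. constructor; auto.
    rewrite Dist, ax7, Eu, (isF_FL Hf) by auto. reflexivity.
  - exists (SAnd s d1). split. econstructor; eauto. rewrite ax7, E2. reflexivity.
  - exists (SOr s1 c1). split. econstructor; eauto. rewrite Dist, E1, E2 by auto. reflexivity.
Qed.

Lemma andSF_aux n :
  (forall k s, isS k n s -> exists f, isF f /\ SAnd s F == f) ->
  forall k s f, isS k n s -> isF f -> exists f', isF f' /\ SAnd s f == f'.
Proof.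
  intros IH k s f Hs Hf.
  destruct (negFt Hf) as [t1 [Ht1 E1]].
  destruct (andST Hs Ht1) as [s' [Hs' E']].
  destruct (IH _ _ Hs') as [f' [Hf' Ef]]. exists f'. split; auto.
  rewrite (FL_eq f) by (apply isF_FL; auto). rewrite <- ax7, E1, E'. auto.
Qed.

Lemma andSF0 n : forall k s, isS k n s -> exists f, isF f /\ SAnd s F == f.
Proof.
  induction n as [n IH] using (well_founded_induction lt_wf).
  intros k s H. inversion H as [a t0 f Ht0 Hf|a t0 f Ht0 Hf|k1 k2 n1 n2 s1 d H1 H2 Hk
                 |k1 k2 n1 n2 s1 c H1 H2 Hk]; subst.
  - destruct (negT Ht0) as [f' [Hf' Ef]].
    exists (SAnd (SOr (SAtom a) f) f'). split. constructor; auto.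
    rewrite <- L1 by (auto using isT_TL, isF_FL). rewrite ax7, TL_andF, Ef by (auto using isT_TL).
    reflexivity.
  - destruct (negT Ht0) as [f' [Hf' Ef]].
    exists (SAnd (SOr (SAtom a) f') f). split. constructor; auto.
    rewrite <- L1 by (auto using isT_TL, isF_FL). rewrite ax7, TL_andF, Ef by (auto using isT_TL).
    apply SWF; auto using isF_FL.
  - pose proof (isS_pos H1). pose proof (isS_pos H2).
    destruct (IH n2 ltac:(lia) _ _ H2) as [f1 [Hf1 E1]].
    destruct (andSF_aux (IH n1 ltac:(lia)) H1 Hf1) as [f2 [Hf2 E2]].
    exists f2. split; auto. rewrite ax7, E1. auto.
  - pose proof (isS_pos H1). pose proof (isS_pos H2).
    destruct (negS H2) as [c1 [Hc1 Ec]].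
    destruct (IH n2 ltac:(lia) _ _ Hc1) as [f1 [Hf1 E1]].
    destruct (negS H1) as [s' [Hs' Es]].
    destruct (andSF_aux (IH n1 ltac:(lia)) Hs' Hf1) as [f2 [Hf2 E2]].
    exists f2. split; auto.
    rewrite <- ax8, dm2, ax7, Ec, E1, Es. auto.
Qed.

Lemma andSF k n s f : isS k n s -> isF f -> exists f', isF f' /\ SAnd s f == f'.
Proof. intros. eapply andSF_aux; eauto. apply andSF0. Qed.

Lemma andSS k n s k' n' s' : isS k n s -> isS k' n' s' ->
  exists k'' n'' s'', isS k'' n'' s'' /\ SAnd s s' == s''.
Proof.
  intros Hs Hs'. revert k n s Hs.
  induction Hs' as [a t f Ht Hf|a t f Ht Hf|k1 k2 n1 n2 s1 d H1 IH1 H2 IH2 Hk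
                 |k1 k2 n1 n2 s1 c H1 IH1 H2 IH2 Hk]; intros k n s Hs.
  - do 3 eexists. split. eapply sAnd. eauto. constructor; eauto. discriminate. reflexivity.
  - do 3 eexists. split. eapply sAnd. eauto. eapply sLN; eauto. discriminate. reflexivity.
  - destruct (IH1 _ _ _ Hs) as [k3 [n3 [s3 [Hs3 E3]]]].
    exists KC, (n3+n2), (SAnd s3 d). split. eapply sAnd; eauto. rewrite <- ax7, E3. reflexivity.
  - exists KC, (n+(n1+n2)), (SAnd s (SOr s1 c)). split.
    eapply sAnd; [eauto| eapply sOr; eauto | discriminate]. reflexivity.
Qed.

Definition NF (x : sterm A) := isT x \/ isF x \/
  exists t k n s, x = SAnd t s /\ isT t /\ isS k n s.

Lemma and_NF x y : NF x -> NF y -> exists z, NF z /\ SAnd x y == z.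
Proof.
  intros [Hx|[Hx|[t [k [n [s [-> [Ht Hs]]]]]]]] [Hy|[Hy|[t' [k' [n' [s' [-> [Ht' Hs']]]]]]]].
  - destruct (andTT Hx Hy) as [u [Hu E]]. exists u. split; auto. left; auto.
  - destruct (andTF Hx Hy) as [u [Hu E]]. exists u. split; auto. right; left; auto.
  - destruct (andTT Hx Ht') as [u [Hu E]]. exists (SAnd u s'). split.
    right; right; eauto 8. rewrite <- ax7, E. reflexivity.
  - exists x. split. right; left; auto. apply isF_FL; auto.
  - exists x. split. right; left; auto. apply isF_FL; auto.
  - exists x. split. right; left; auto. apply isF_FL; auto.
  - destruct (andST Hs Hy) as [u [Hu E]]. exists (SAnd t u). split.
    right; right; eauto 8. rewrite ax7, E. reflexivity.
  - destruct (andSF Hs Hy) as [u [Hu E]]. destruct (andTF Ht Hu) as [v [Hv E']].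
    exists v. split. right; left; auto. rewrite ax7, E, E'. reflexivity.
  - destruct (andST Hs Ht') as [u [Hu E]]. destruct (andSS Hu Hs') as [k3 [n3 [s3 [Hs3 E3]]]].
    exists (SAnd t s3). split. right; right; eauto 8.
    rewrite ax7, <- (ax7 s), E, E3. reflexivity.
Qed.

Lemma neg_NF x : NF x -> exists z, NF z /\ SNeg x == z.
Proof.
  intros [Hx|[Hx|[t [k [n [s [-> [Ht Hs]]]]]]]].
  - destruct (negT Hx) as [u [Hu E]]. exists u. split; auto. right; left; auto.
  - destruct (negFt Hx) as [u [Hu E]]. exists u. split; auto. left; auto.
  - destruct (negS Hs) as [s' [Hs' E]]. exists (SAnd t s'). split. right; right; eauto 8.
    rewrite dm1, FL_or, ax3, E. reflexivity. apply TL_neg, isT_TL; auto.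
Qed.

Lemma closed_NF P : sclosed P -> exists N, NF N /\ P == N.
Proof.
  induction P; simpl; intro HP.
  - destruct HP.
  - exists T. split. left; constructor. reflexivity.
  - exists F. split. right; left; constructor. reflexivity.
  - exists (SAnd T (SOr (SAnd (SAtom a) T) F)). split.
    right; right. do 4 eexists. split. reflexivity. split. constructor. constructor; constructor.
    rewrite ax4, ax5, andT. reflexivity.
  - destruct (IHP HP) as [N [HN E]]. destruct (neg_NF HN) as [z [Hz Ez]].
    exists z. split; auto. rewrite E; auto.
  - destruct HP as [H1 H2]. destruct (IHP1 H1) as [N1 [HN1 E1]]. destruct (IHP2 H2) as [N2 [HN2 E2]].
    destruct (and_NF HN1 HN2) as [z [Hz Ez]]. exists z. split; auto. rewrite E1, E2; auto.
  - destruct HP as [H1 H2]. destruct (IHP1 H1) as [N1 [HN1 E1]]. destruct (IHP2 H2) as [N2 [HN2 E2]].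
    destruct (neg_NF HN1) as [M1 [HM1 F1']]. destruct (neg_NF HN2) as [M2 [HM2 F2']].
    destruct (and_NF HM1 HM2) as [z [Hz Ez]]. destruct (neg_NF Hz) as [w [Hw Ew]].
    exists w. split; auto. rewrite ax2, E1, E2, F1', F2', Ez, Ew. reflexivity.
Qed.


Unset Strict Implicit.

Fixpoint subb (b : bool) (x c : tr) : tr :=
  match x with
  | Lf b' => if Bool.eqb b' b then c else Lf b'
  | Nd a l r => Nd a (subb b l c) (subb b r c)
  end.

Lemma sb_subbT x y : sb x y (Lf false) = subb true x y.
Proof. induction x as [[]|a l IHl r IHr]; simpl; congruence. Qed.
Lemma sb_subbF x y : sb x (Lf true) y = subb false x y.
Proof. induction x as [[]|a l IHl r IHr]; simpl; congruence. Qed.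

Fixpoint hasb (b : bool) (t : tr) : Prop :=
  match t with Lf b' => b' = b | Nd _ l r => hasb b l \/ hasb b r end.
Fixpoint allb (b : bool) (t : tr) : Prop :=
  match t with Lf b' => b' = b | Nd _ l r => allb b l /\ allb b r end.
Definition mixed t := hasb true t /\ hasb false t.
Fixpoint cnt (b : bool) (t : tr) : nat :=
  match t with Lf b' => if Bool.eqb b' b then 1 else 0 | Nd _ l r => cnt b l + cnt b r end.
Fixpoint size (t : tr) : nat :=
  match t with Lf _ => 1 | Nd _ l r => S (size l + size r) end.
Definition req x y := cnt false x * cnt true y = cnt false y * cnt true x.
Definition good t := exists a l r, t = Nd a l r /\ ~ req l r.
Fixpoint covers (b : bool) (t u : tr) : Prop :=
  t = u \/ match t with Lf b' => b' <> b | Nd _ l r => covers b l u /\ covers b r u end.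
Fixpoint fcov (t u : tr) : Prop :=
  t = u \/ match t with Lf _ => False | Nd _ l r => fcov l u /\ fcov r u end.
Definition KLb b t := forall u, mixed u -> covers b t u -> u = t.

Lemma all_has b t : allb b t -> hasb (negb b) t -> False.
Proof. induction t as [b'|a l IHl r IHr]; simpl. intros -> H. destruct b; discriminate. tauto. Qed.
Lemma all_has' b t : allb (negb b) t -> hasb b t -> False.
Proof. intros H1 H2. apply (all_has H1). rewrite negb_involutive; auto. Qed.
Lemma has_or_all b t : hasb b t \/ allb (negb b) t.
Proof. induction t as [b'|a l IHl r IHr]; simpl. destruct b, b'; auto. tauto. Qed.
Lemma allb_has b t : allb b t -> hasb b t.
Proof. induction t; simpl; tauto. Qed.
Lemma all_TF t : allb true t -> allb false t -> False.
Proof. intros H1 H2. apply (all_has H1). apply allb_has; auto. Qed.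
Lemma leaf_not_mixed b : ~ mixed (Lf b).
Proof. unfold mixed; simpl. intros [-> H]; discriminate. Qed.
Lemma all_cnt b t : allb b t -> cnt (negb b) t = 0 /\ 1 <= cnt b t.
Proof.
  induction t as [b'|a l IHl r IHr]; simpl.
  - intros ->. destruct b; simpl; auto.
  - intros [H1 H2]. destruct (IHl H1), (IHr H2). lia.
Qed.

Lemma sub_nohas b y c : ~ hasb b y -> subb b y c = y.
Proof.
  induction y as [b'|a l IHl r IHr]; simpl; intro H.
  - destruct b, b'; simpl; tauto.
  - rewrite IHl, IHr; tauto.
Qed.

Lemma size_sub_le b y c : hasb b y -> size c <= size (subb b y c).
Proof.
  induction y as [b'|a l IHl r IHr]; simpl; intro H.
  - subst. rewrite Bool.eqb_reflx. lia.
  - destruct H; [specialize (IHl H)|specialize (IHr H)]; lia.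
Qed.
Lemma size_sub_lt b y c : hasb b y -> y <> Lf b -> size c < size (subb b y c).
Proof.
  destruct y as [b'|a l r]; simpl; intros H H'.
  - subst. congruence.
  - destruct H; [pose proof (size_sub_le c H)|pose proof (size_sub_le c H)]; lia.
Qed.
Lemma size_sub_ge b y c : hasb b y -> size (subb b y c) <= size c -> y = Lf b.
Proof.
  intros H1 H2. destruct y as [b'|a l r]. simpl in H1; subst; auto.
  pose proof (size_sub_lt c H1 ltac:(discriminate)). lia.
Qed.

Lemma has_sub1 b z c x : hasb b z -> hasb x c -> hasb x (subb b z c).
Proof.
  induction z as [b'|a l IHl r IHr]; simpl; intros H1 H2.
  - subst. rewrite Bool.eqb_reflx. auto.
  - tauto.
Qed.
Lemma has_sub2 b z c : hasb (negb b) z -> hasb (negb b) (subb b z c).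
Proof.
  induction z as [b'|a l IHl r IHr]; simpl; intros H1.
  - subst. destruct b; simpl; auto.
  - tauto.
Qed.
Lemma has_nb b z c : mixed c -> hasb (negb b) (subb b z c).
Proof.
  intro Hc. destruct (has_or_all b z) as [H|H].
  - apply has_sub1; auto. destruct b, Hc; simpl; auto.
  - apply has_sub2, allb_has; auto.
Qed.
Lemma mixed_sub b z c : mixed z -> mixed c -> mixed (subb b z c).
Proof.
  intros [Hz1 Hz2] Hc. pose proof (has_nb b z Hc) as H.
  destruct b; simpl in H; split; auto; apply has_sub1; auto; apply Hc.
Qed.
Lemma all_sub_false b z c : mixed c -> allb b (subb b z c) -> False.
Proof. intros Hc H. apply (all_has H). apply has_nb; auto. Qed.

Lemma subb_inj b y1 y2 c : mixed c -> subb b y1 c = subb b y2 c -> y1 = y2.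
Proof.
  intro Hc. revert y2. induction y1 as [b1|a l IHl r IHr]; intros y2 E.
  - simpl in E. destruct (Bool.eqb b1 b) eqn:Eb.
    + apply Bool.eqb_prop in Eb. subst b1.
      destruct (has_or_all b y2) as [H|H].
      * symmetry. apply size_sub_ge with (c := c); auto. rewrite <- E. lia.
      * rewrite sub_nohas in E. subst. exfalso. apply (all_has' H). destruct b; apply Hc.
        intro H'. apply (all_has' H H').
    + destruct y2 as [b2|a2 l2 r2]; simpl in E.
      * destruct (Bool.eqb b2 b) eqn:Eb2.
        -- subst c. exfalso; apply (leaf_not_mixed Hc).
        -- congruence.
      * discriminate.
  - destruct y2 as [b2|a2 l2 r2]; simpl in E.
    + destruct (Bool.eqb b2 b) eqn:Eb2.
      * apply Bool.eqb_prop in Eb2. subst b2.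
        assert (Hh : hasb b (Nd a l r) \/ allb (negb b) (Nd a l r)) by apply has_or_all.
        destruct Hh as [H|H].
        -- exfalso. pose proof (size_sub_lt c H ltac:(discriminate)). simpl subb in H0.
           rewrite E in H0. lia.
        -- exfalso. assert (E2 : subb b (Nd a l r) c = Nd a l r)
             by (apply sub_nohas; intro H'; apply (all_has' H H')).
           simpl in E2. rewrite E2 in E. subst c. apply (all_has' H). destruct b; apply Hc.
      * discriminate.
    + injection E; intros; subst. f_equal; auto.
Qed.

Lemma cnt_sub b x z c : cnt x (subb b z c) = (if Bool.eqb x b then 0 else cnt x z) + cnt b z * cnt x c.
Proof.
  induction z as [b'|a l IHl r IHr]; simpl.
  - destruct b, b', x; simpl; lia.
  - rewrite IHl, IHr. destruct (Bool.eqb x b); lia.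
Qed.

Lemma req_sub b l r c : mixed c -> req (subb b l c) (subb b r c) -> req l r.
Proof.
  unfold req. intros [Hc1 Hc2] H. rewrite !cnt_sub in H.
  assert (P1 : 1 <= cnt true c). { clear -Hc1. induction c as [b'|a l IHl r IHr]; simpl in *.
     subst; simpl; lia. destruct Hc1; [specialize (IHl H)|specialize (IHr H)]; lia. }
  assert (P2 : 1 <= cnt false c). { clear -Hc2. induction c as [b'|a l IHl r IHr]; simpl in *.
     subst; simpl; lia. destruct Hc2; [specialize (IHl H)|specialize (IHr H)]; lia. }
  destruct b; simpl in H.
  - set (Fl := cnt false l) in *. set (Fr := cnt false r) in *. set (Tl := cnt true l) in *.
    set (Tr := cnt true r) in *. set (Tc := cnt true c) in *. set (Fc := cnt false c) in *.
    assert (E : Tc * (Fl * Tr) + Tc * (Tl * Tr * Fc) = Tc * (Fr * Tl) + Tc * (Tl * Tr * Fc)) by nia.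
    apply Nat.add_cancel_r in E. apply Nat.mul_cancel_l in E; lia.
  - set (Fl := cnt false l) in *. set (Fr := cnt false r) in *. set (Tl := cnt true l) in *.
    set (Tr := cnt true r) in *. set (Tc := cnt true c) in *. set (Fc := cnt false c) in *.
    assert (E : Fc * (Fl * Tr) + Fc * (Fl * Fr * Tc) = Fc * (Fr * Tl) + Fc * (Fl * Fr * Tc)) by nia.
    apply Nat.add_cancel_r in E. apply Nat.mul_cancel_l in E; lia.
Qed.

Lemma fcov_cnt x y : fcov x y -> exists k, 1 <= k /\ forall b, cnt b x = k * cnt b y.
Proof.
  induction x as [b'|a l IHl r IHr]; simpl.
  - intros [<-|[]]. exists 1. split; [lia|intro; simpl; lia].
  - intros [<-|[H1 H2]].
    + exists 1. split; [lia|intro; simpl; lia].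
    + destruct (IHl H1) as [k1 [Hk1 E1]]. destruct (IHr H2) as [k2 [Hk2 E2]].
      exists (k1 + k2). split. lia. intro b. rewrite E1, E2. lia.
Qed.
Lemma fcov_req l r y : fcov l y -> fcov r y -> req l r.
Proof.
  intros H1 H2. destruct (fcov_cnt H1) as [k1 [_ E1]]. destruct (fcov_cnt H2) as [k2 [_ E2]].
  unfold req. rewrite !E1, !E2. ring.
Qed.
Lemma fcov_leaf l b : fcov l (Lf b) -> allb b l.
Proof.
  induction l as [b'|a l1 IH1 r1 IH2]; simpl.
  - intros [H|[]]. congruence.
  - intros [H|[H1 H2]]. discriminate. auto.
Qed.
Lemma covers_size b t u : covers b t u -> hasb b t -> size u <= size t.
Proof.
  induction t as [b'|a l IHl r IHr]; simpl.
  - intros [<-|H] H'. auto. congruence.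
  - intros [<-|[H1 H2]] H. auto. destruct H; [specialize (IHl H1 H)|specialize (IHr H2 H)]; lia.
Qed.
Lemma covers_all b t u : covers b t u -> allb b t -> allb b u.
Proof.
  induction t as [b'|a l IHl r IHr]; simpl.
  - intros [<-|H] H'. simpl; auto. congruence.
  - intros [<-|[H1 H2]] H. simpl; auto. tauto.
Qed.
Lemma covers_refl b t : covers b t t.
Proof. destruct t; simpl; left; auto. Qed.
Lemma fcov_refl t : fcov t t.
Proof. destruct t; simpl; left; auto. Qed.
Lemma covers_sub_self b x d : covers b (subb b x d) d.
Proof.
  induction x as [b'|a l IHl r IHr]; simpl.
  - destruct (Bool.eqb b' b) eqn:E. apply covers_refl. right. intro; subst. rewrite Bool.eqb_reflx in E; discriminate.
  - right; auto.
Qed.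
Lemma sub_all_fcov b X s : allb b X -> fcov (subb b X s) s.
Proof.
  induction X as [b'|a l IHl r IHr]; simpl.
  - intros ->. rewrite Bool.eqb_reflx. apply fcov_refl.
  - intros [H1 H2]. right; auto.
Qed.

Lemma AB b l y u c : u = subb b y c -> fcov l y -> mixed u -> mixed c -> size u <= size c ->
  allb b l /\ u = c.
Proof.
  intros Eu Fl Hu Hc Hs. destruct (has_or_all b y) as [H|H].
  - assert (y = Lf b) by (apply size_sub_ge with (c := c); auto; rewrite <- Eu; auto).
    subst y. simpl in Eu. rewrite Bool.eqb_reflx in Eu. split; auto. apply fcov_leaf; auto.
  - exfalso. rewrite sub_nohas in Eu. subst u. apply (all_has' H). destruct b; apply Hu.
    intro H'. apply (all_has' H H').
Qed.

Lemma LA b c x u : covers (negb b) (subb b x c) u -> mixed u -> mixed c ->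
  (exists y, u = subb b y c /\ fcov x y) \/ (allb b x /\ size u <= size c).
Proof.
  intros Hcov Hu Hc. induction x as [b'|a l IHl r IHr].
  - simpl in Hcov. destruct (Bool.eqb b' b) eqn:E.
    + apply Bool.eqb_prop in E. subst b'. right. split. simpl; auto.
      apply covers_size with (b := negb b); auto. destruct b; apply Hc.
    + exfalso. simpl in Hcov. destruct Hcov as [<-|H]. apply (leaf_not_mixed Hu).
      destruct b, b'; simpl in *; congruence.
  - simpl in Hcov. destruct Hcov as [E|[C1 C2]].
    + left. exists (Nd a l r). split; auto. simpl; auto.
    + destruct (IHl C1) as [[yl [El Fl]]|[Al Sl]]; destruct (IHr C2) as [[yr [Er Fr]]|[Ar Sr]].
      * left. exists yl. split; auto. assert (yl = yr) by (apply subb_inj with b c; congruence).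
        subst. simpl; auto.
      * destruct (AB El Fl Hu Hc Sr) as [Al ->]. right. simpl; auto.
      * destruct (AB Er Fr Hu Hc Sl) as [Ar ->]. right. simpl; auto.
      * right. simpl; auto.
Qed.

Lemma KL_gen b S c : good S -> mixed S -> mixed c -> KLb (negb b) (subb b S c).
Proof.
  intros [a [l [r [-> Hg]]]] HS Hc u Hu Hcov.
  destruct (LA Hcov Hu Hc) as [[y [-> Fy]]|[Hall _]].
  - simpl in Fy. destruct Fy as [<-|[F1 F2]]. reflexivity.
    exfalso. apply Hg. apply fcov_req with y; auto.
  - exfalso. apply (all_has Hall). destruct b; apply HS.
Qed.

Lemma LB b d : KLb b d -> forall x u, covers b (subb b x d) u -> mixed u -> hasb b x ->
  exists y, u = subb b y d /\ hasb b y.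
Proof.
  intros Hd x. induction x as [b'|a l IHl r IHr]; intros u Hcov Hu Hx.
  - simpl in Hx. subst b'. simpl in Hcov. rewrite Bool.eqb_reflx in Hcov.
    exists (Lf b). simpl. rewrite Bool.eqb_reflx. split; auto.
  - simpl in Hcov. destruct Hcov as [E|[C1 C2]].
    + exists (Nd a l r). split; auto.
    + simpl in Hx. destruct Hx as [H|H]; [apply IHl|apply IHr]; auto.
Qed.

Lemma top_inj b S1 S1' d d' : mixed S1 -> mixed S1' -> mixed d -> mixed d' ->
  KLb b d -> KLb b d' -> subb b S1 d = subb b S1' d' -> S1 = S1' /\ d = d'.
Proof.
  intros H1 H1' Hd Hd' K K' E.
  assert (hb : forall t, mixed t -> hasb b t) by (intros t [? ?]; destruct b; auto).
  pose proof (covers_sub_self b S1' d') as C'. rewrite <- E in C'.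
  destruct (LB K C' Hd' (hb _ H1)) as [y [Ey Hy]].
  pose proof (covers_sub_self b S1 d) as C. rewrite E in C.
  destruct (LB K' C Hd (hb _ H1')) as [y' [Ey' Hy']].
  pose proof (size_sub_le d Hy). pose proof (size_sub_le d' Hy').
  rewrite <- Ey in *. rewrite <- Ey' in *.
  assert (y = Lf b) by (apply size_sub_ge with (c := d); auto; rewrite <- Ey; lia).
  subst y. simpl in Ey. rewrite Bool.eqb_reflx in Ey. subst d'.
  split; auto. apply subb_inj with b d; auto.
Qed.

Lemma top_diff b S1 d : mixed S1 -> mixed d -> KLb b (subb b S1 d) -> False.
Proof.
  intros H1 Hd K. pose proof (K d Hd (covers_sub_self b S1 d)) as E.
  assert (E' : subb b (Lf b) d = subb b S1 d) by (simpl; rewrite Bool.eqb_reflx; auto).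
  apply subb_inj in E'; auto. subst. apply (leaf_not_mixed H1).
Qed.

Lemma lit_not_top b a X Y S1 d : mixed S1 -> mixed d ->
  ((allb true X /\ allb false Y) \/ (allb false X /\ allb true Y)) ->
  Nd a X Y = subb b S1 d -> False.
Proof.
  intros H1 Hd HXY E. destruct S1 as [b1|a1 l r]. apply (leaf_not_mixed H1).
  simpl in E. injection E; intros EY EX _.
  destruct b; destruct HXY as [[X1 Y1]|[X1 Y1]]; subst;
    first [exact (all_sub_false Hd X1) | exact (all_sub_false Hd Y1)].
Qed.

Lemma prefix_inj X X' s s' : allb true X -> allb true X' -> good s -> good s' ->
  subb true X s = subb true X' s' -> X = X' /\ s = s'.
Proof.
  revert X'. induction X as [b|a l IHl r IHr]; intros X' HX HX' Gs Gs' E.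
  - simpl in HX. subst b. simpl in E. destruct X' as [b'|a' l' r'].
    + simpl in HX'. subst b'. simpl in E. auto.
    + exfalso. simpl in E. destruct Gs as [a0 [l0 [r0 [E0 Hg]]]]. rewrite E0 in E.
      injection E; intros; subst. apply Hg. destruct HX'. apply fcov_req with s';
      apply sub_all_fcov; auto.
  - destruct X' as [b'|a' l' r'].
    + exfalso. simpl in HX'. subst b'. simpl in E.
      destruct Gs' as [a0 [l0 [r0 [E0 Hg]]]]. rewrite E0 in E.
      injection E; intros; subst. apply Hg. destruct HX. apply fcov_req with s;
      apply sub_all_fcov; auto.
    + simpl in E. injection E; intros E2 E1 ->. destruct HX, HX'.
      destruct (IHl l'); auto. destruct (IHr r'); auto. subst; auto.
Qed.


Lemma sb_allT x q : allb true x -> sb x (Lf true) q = x.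
Proof. induction x as [b|a l IHl r IHr]; simpl. intros ->; auto. intros [? ?]; f_equal; auto. Qed.
Lemma sb_allF x p : allb false x -> sb x p (Lf false) = x.
Proof. induction x as [b|a l IHl r IHr]; simpl. intros ->; auto. intros [? ?]; f_equal; auto. Qed.

Notation sm := (sem e0).

Lemma sem_tN a t1 t2 : allb true (sm t1) ->
  sm (SOr (SAnd (SNeg (SAtom a)) t1) t2) = Nd a (sm t2) (sm t1).
Proof. intro H. simpl. rewrite sb_allT; auto. Qed.
Lemma sem_fN a f1 f2 : allb false (sm f1) ->
  sm (SAnd (SOr (SAtom a) f1) f2) = Nd a (sm f2) (sm f1).
Proof. intro H. simpl. rewrite sb_allF; auto. Qed.
Lemma sem_lP a t f : allb true (sm t) ->
  sm (SOr (SAnd (SAtom a) t) f) = Nd a (sm t) (sm f).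
Proof. intro H. simpl. rewrite sb_allT; auto. Qed.
Lemma sem_lN a t f : allb true (sm t) ->
  sm (SOr (SAnd (SNeg (SAtom a)) t) f) = Nd a (sm f) (sm t).
Proof. intro H. simpl. rewrite sb_allT; auto. Qed.

Lemma isT_all t : isT t -> allb true (sm t).
Proof. induction 1. simpl; auto. rewrite sem_tN; simpl; auto. Qed.
Lemma isF_all f : isF f -> allb false (sm f).
Proof. induction 1. simpl; auto. rewrite sem_fN; simpl; auto. Qed.

Lemma T_inj t t' : isT t -> isT t' -> sm t = sm t' -> t = t'.
Proof.
  intro H. revert t'. induction H as [|a t1 t2 H1 IH1 H2 IH2]; intros t' H' E; destruct H' as [|a' t1' t2' H1' H2'].
  - auto.
  - rewrite sem_tN in E by (apply isT_all; auto). discriminate.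
  - rewrite sem_tN in E by (apply isT_all; auto). discriminate.
  - rewrite !sem_tN in E by (apply isT_all; auto). injection E; intros.
    subst. f_equal. f_equal. f_equal. auto. auto.
Qed.
Lemma F_inj t t' : isF t -> isF t' -> sm t = sm t' -> t = t'.
Proof.
  intro H. revert t'. induction H as [|a t1 t2 H1 IH1 H2 IH2]; intros t' H' E; destruct H' as [|a' t1' t2' H1' H2'].
  - auto.
  - rewrite sem_fN in E by (apply isF_all; auto). discriminate.
  - rewrite sem_fN in E by (apply isF_all; auto). discriminate.
  - rewrite !sem_fN in E by (apply isF_all; auto). injection E; intros.
    subst. f_equal. f_equal. auto. auto.
Qed.

Lemma lit_props a X Y : allb true X -> allb false Y ->
  mixed (Nd a X Y) /\ good (Nd a X Y) /\ KLb true (Nd a X Y) /\ KLb false (Nd a X Y) /\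
  mixed (Nd a Y X) /\ good (Nd a Y X) /\ KLb true (Nd a Y X) /\ KLb false (Nd a Y X).
Proof.
  intros HX HY. pose proof (all_cnt HX) as [CX1 CX2]. pose proof (all_cnt HY) as [CY1 CY2].
  simpl in CX1, CY1.
  assert (hX := allb_has HX). assert (hY := allb_has HY).
  unfold mixed, KLb, good, req; simpl.
  repeat split; auto.
  - exists a, X, Y. split; auto. rewrite CX1, CY1. lia.
  - intros u [u1 u2] [E|[C1 C2]]; auto. exfalso. apply (all_has (covers_all C1 HX)); auto.
  - intros u [u1 u2] [E|[C1 C2]]; auto. exfalso. apply (all_has (covers_all C2 HY)); auto.
  - exists a, Y, X. split; auto. rewrite CX1, CY1. lia.
  - intros u [u1 u2] [E|[C1 C2]]; auto. exfalso. apply (all_has (covers_all C2 HX)); auto.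
  - intros u [u1 u2] [E|[C1 C2]]; auto. exfalso. apply (all_has (covers_all C1 HY)); auto.
Qed.

Lemma good_sub b S c : good S -> mixed c -> good (subb b S c).
Proof.
  intros [a [l [r [-> Hg]]]] Hc. exists a, (subb b l c), (subb b r c). split; auto.
  intro H. apply Hg. apply (req_sub Hc H).
Qed.

Lemma sem_and x y : sm (SAnd x y) = subb true (sm x) (sm y).
Proof. simpl. apply sb_subbT. Qed.
Lemma sem_or x y : sm (SOr x y) = subb false (sm x) (sm y).
Proof. simpl. apply sb_subbF. Qed.

Lemma Sprops k n s : isS k n s -> mixed (sm s) /\ good (sm s) /\
  (k <> KC -> KLb true (sm s)) /\ (k <> KD -> KLb false (sm s)).
Proof.
  induction 1 as [a t f Ht Hf|a t f Ht Hf|k1 k2 n1 n2 s d H1 [M1 [G1 _]] H2 [M2 [G2 _]] Hk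
                 |k1 k2 n1 n2 s c H1 [M1 [G1 _]] H2 [M2 [G2 _]] Hk].
  - rewrite sem_lP by (apply isT_all; auto).
    destruct (lit_props a (isT_all Ht) (isF_all Hf)) as [? [? [? [? _]]]]. tauto.
  - rewrite sem_lN by (apply isT_all; auto).
    destruct (lit_props a (isT_all Ht) (isF_all Hf)) as [_ [_ [_ [_ [? [? [? ?]]]]]]]. tauto.
  - rewrite sem_and. split. apply mixed_sub; auto. split. apply good_sub; auto.
    split. congruence. intros _. apply (@KL_gen true); auto.
  - rewrite sem_or. split. apply mixed_sub; auto. split. apply good_sub; auto.
    split. intros _. apply (@KL_gen false); auto. congruence.
Qed.

Lemma S_inj k n s k' n' s' : isS k n s -> isS k' n' s' -> sm s = sm s' -> s = s'.
Proof.
  intro H. revert k' n' s'.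
  induction H as [a t f Ht Hf|a t f Ht Hf|k1 k2 n1 n2 s d H1 IH1 H2 IH2 Hk
                 |k1 k2 n1 n2 s c H1 IH1 H2 IH2 Hk];
  intros k' n' s' H' E; pose proof (Sprops H') as [M' [G' [KT' KF']]];
  destruct H' as [a' t' f' Ht' Hf'|a' t' f' Ht' Hf'|k1' k2' n1' n2' s1' d' H1' H2' Hk'
                 |k1' k2' n1' n2' s1' c' H1' H2' Hk'];
  repeat rewrite ?sem_lP, ?sem_lN, ?sem_and, ?sem_or in E by (apply isT_all; auto);
  repeat rewrite ?sem_and, ?sem_or in KT', KF'.
  - injection E; intros. subst. f_equal. f_equal. f_equal. apply T_inj; auto. apply F_inj; auto.
  - exfalso. injection E; intros. apply (all_TF (isT_all Ht)). rewrite H0. apply isF_all; auto.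
  - exfalso. destruct (Sprops H1') as [? _]. destruct (Sprops H2') as [? _].
    exact (lit_not_top H H0 (or_introl (conj (isT_all Ht) (isF_all Hf))) E).
  - exfalso. destruct (Sprops H1') as [? _]. destruct (Sprops H2') as [? _].
    exact (lit_not_top H H0 (or_introl (conj (isT_all Ht) (isF_all Hf))) E).
  - exfalso. injection E; intros. apply (all_TF (isT_all Ht')). rewrite <- H0. apply isF_all; auto.
  - injection E; intros. subst. f_equal. f_equal. f_equal. apply T_inj; auto. apply F_inj; auto.
  - exfalso. destruct (Sprops H1') as [? _]. destruct (Sprops H2') as [? _].
    exact (lit_not_top H H0 (or_intror (conj (isF_all Hf) (isT_all Ht))) E).
  - exfalso. destruct (Sprops H1') as [? _]. destruct (Sprops H2') as [? _].
    exact (lit_not_top H H0 (or_intror (conj (isF_all Hf) (isT_all Ht))) E).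
  - exfalso. destruct (Sprops H1) as [? _]. destruct (Sprops H2) as [? _].
    exact (lit_not_top H H0 (or_introl (conj (isT_all Ht') (isF_all Hf'))) (eq_sym E)).
  - exfalso. destruct (Sprops H1) as [? _]. destruct (Sprops H2) as [? _].
    exact (lit_not_top H H0 (or_intror (conj (isF_all Hf') (isT_all Ht'))) (eq_sym E)).
  - destruct (Sprops H1) as [? _]. destruct (Sprops H2) as [? [_ [K2 _]]].
    destruct (Sprops H1') as [? _]. destruct (Sprops H2') as [? [_ [K2' _]]].
    destruct (top_inj H H3 H0 H4 (K2 Hk) (K2' Hk') E) as [E1 E2].
    f_equal; eauto.
  - exfalso. destruct (Sprops H1) as [? _]. destruct (Sprops H2) as [? _].
    rewrite <- E in KT'. apply (top_diff H H0 (KT' ltac:(discriminate))).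
  - exfalso. destruct (Sprops H1) as [? _]. destruct (Sprops H2) as [? _].
    exact (lit_not_top H H0 (or_introl (conj (isT_all Ht') (isF_all Hf'))) (eq_sym E)).
  - exfalso. destruct (Sprops H1) as [? _]. destruct (Sprops H2) as [? _].
    exact (lit_not_top H H0 (or_intror (conj (isF_all Hf') (isT_all Ht'))) (eq_sym E)).
  - exfalso. destruct (Sprops H1) as [? _]. destruct (Sprops H2) as [? _].
    rewrite <- E in KF'. apply (top_diff H H0 (KF' ltac:(discriminate))).
  - destruct (Sprops H1) as [? _]. destruct (Sprops H2) as [? [_ [_ K2]]].
    destruct (Sprops H1') as [? _]. destruct (Sprops H2') as [? [_ [_ K2']]].
    destruct (top_inj H H3 H0 H4 (K2 Hk) (K2' Hk') E) as [E1 E2].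
    f_equal; eauto.
Qed.


Lemma TS_mixed t k n s : isT t -> isS k n s -> mixed (sm (SAnd t s)).
Proof.
  intros Ht Hs. rewrite sem_and. destruct (Sprops Hs) as [M _].
  split. apply has_sub1. apply allb_has, isT_all; auto. apply M.
  apply (@has_nb true). auto.
Qed.

Lemma NF_inj x y : NF x -> NF y -> sm x = sm y -> x = y.
Proof.
  intros [Hx|[Hx|[t [k [n [s [-> [Ht Hs]]]]]]]] [Hy|[Hy|[t' [k' [n' [s' [-> [Ht' Hs']]]]]]]] E.
  - apply T_inj; auto.
  - exfalso. apply (all_TF (isT_all Hx)). rewrite E. apply isF_all; auto.
  - exfalso. destruct (TS_mixed Ht' Hs') as [_ M]. rewrite <- E in M.
    apply (all_has (isT_all Hx) M).
  - exfalso. apply (all_TF (isT_all Hy)). rewrite <- E. apply isF_all; auto.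
  - apply F_inj; auto.
  - exfalso. destruct (TS_mixed Ht' Hs') as [M _]. rewrite <- E in M.
    apply (all_has (isF_all Hx) M).
  - exfalso. destruct (TS_mixed Ht Hs) as [_ M]. rewrite E in M.
    apply (all_has (isT_all Hy) M).
  - exfalso. destruct (TS_mixed Ht Hs) as [M _]. rewrite E in M.
    apply (all_has (isF_all Hy) M).
  - rewrite !sem_and in E. destruct (Sprops Hs) as [_ [G _]]. destruct (Sprops Hs') as [_ [G' _]].
    destruct (prefix_inj (isT_all Ht) (isT_all Ht') G G' E) as [E1 E2].
    f_equal. apply T_inj; auto. eapply S_inj; eauto.
Qed.

Lemma dir2 (P Q : sterm A) : sclosed P -> sclosed Q -> FSCL_derives (embed P) (embed Q) ->
  EqFSCL_derives P Q.
Proof.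
  intros HP HQ H. pose proof (c_sound _ _ H e0) as E. rewrite !csem_embed in E.
  destruct (closed_NF _ HP) as [N [HN EN]]. destruct (closed_NF _ HQ) as [M [HM EM]].
  assert (N = M). { apply NF_inj; auto. rewrite <- (eq_sound _ _ EN e0), <- (eq_sound _ _ EM e0). auto. }
  subst. rewrite EN, EM. reflexivity.
Qed.

End Main.

Theorem theorem4p3 (A : Type) (a0 : A) (P Q : sterm A) :
  sclosed P -> sclosed Q ->
  (EqFSCL_derives P Q <-> FSCL_derives (embed P) (embed Q)).
Proof.
  intros HP HQ. split.
  - apply dir1; auto.
  - apply dir2; auto.
Qed.
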